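(* Let $b,c,t$ be positive integers, $n=tb$, and let $\mathbf{H}^{*}_{qc}$ be a $cb\times tb$ binary matrix which is a $c\times t$ array of $b\times b$ circulant matrices over $\mathbb{F}_2$, of rank $r$ over $\mathbb{F}_2$. Let $\mathcal{C}\subseteq\mathbb{F}_2^n$ be the code with parity-check matrix $\mathbf{H}^{*}_{qc}$ and $\Lambda=\mathcal{C}+2\mathbb{Z}^n=\{\mathbf{x}\in\mathbb{Z}^n:\mathbf{x}\bmod 2\in\mathcal{C}\}$. Suppose $l$ with $c\le l\le t$ is the least number of columns of circulants of $\mathbf{H}^{*}_{qc}$ forming a submatrix of rank $r$, and that the last $l$ columns of circulants form such a $cb\times lb$ submatrix $\mathbf{D}^{*}$. Suppose $d_1,\dots,d_l\in\{0,\dots,b\}$, $\bar d_j=b-d_j$, are such that the columns of $\mathbf{D}^{*}$ consisting, for each $j$, of the last $\bar d_j$ columns of its $j$-th column block (width $b$) are linearly independent over $\mathbb{F}_2$ and number exactly $r$. For each $i$ with $d_i\ge1$, let $\mathbf{w}_i=(\mathbf{w}_i^{(1)},\dots,\mathbf{w}_i^{(l)})\in\mathbb{F}_2^{lb}$, $\mathbf{w}_i^{(j)}\in\mathbb{F}_2^b$, be the vector with $\mathbf{D}^{*}\mathbf{w}_i^t=\mathbf{0}$ whose first $d_j$ entries of $\mathbf{w}_i^{(j)}$ are $(1,0,\dots,0)$ if $j=i$ and all $0$ otherwise; with $\sigma$ the cyclic right shift on $\mathbb{F}_2^b$, let $\mathbf{Q}$ be the $(lb-r)\times tb$ matrix with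 rows $(\mathbf{0}_{(t-l)b},\sigma^s(\mathbf{w}_i^{(1)}),\dots,\sigma^s(\mathbf{w}_i^{(l)}))$ for $i=1,\dots,l$, $s=0,\dots,d_i-1$. Let $\mathbf{G}=[\mathbf{I}_{(t-l)b}\,|\,\mathbf{G}']$ with $\mathbf{G}'$ a $(t-l)\times l$ array of $b\times b$ circulants, and assume $\mathbf{G}^{*}_{qc}=\begin{bmatrix}\mathbf{G}\\ \mathbf{Q}\end{bmatrix}$ is a generator matrix of $\mathcal{C}$. Let $\mathbf{R}=[\mathbf{0}_{r\times(t-l)b}\,|\,\mathbf{B}]$, where $\mathbf{B}$ is block diagonal with $j$-th block $[\mathbf{0}_{\bar d_j\times d_j}\ \ 2\mathbf{I}_{\bar d_j}]$, and let $\mathbf{G}_\Lambda=\begin{bmatrix}\mathbf{G}^{*}_{qc}\\ \mathbf{R}\end{bmatrix}$ (entries as integers). Then $|\det(\mathbf{G}_\Lambda)|=2^r$; that is, the volume of $\Lambda$ (the volume of a fundamental region, $\sqrt{\det(\mathbf{G}_\Lambda\mathbf{G}_\Lambda^t)}$) equals $2^r$, where $r=\mathrm{rank}_{\mathbb{F}_2}(\mathbf{H}^{*}_{qc})$.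
   Context: Codewords of a binary code are embedded in $\mathbb{Z}^n$ with entries $0,1$; $\Lambda=\mathcal{C}+2\mathbb{Z}^n$ is the Construction A (QC-LDPC) lattice of $\mathcal{C}$. *)

(* Defs.v *)
From HB Require Import structures.
From mathcomp Require Import all_boot all_order all_algebra.
Unset Printing Implicit Defensive.
Import Order.TTheory GRing.Theory Num.Theory.
Local Open Scope ring_scope.

(* Indices k : 'I_n of F^n (n = m*b) are grouped into consecutive blocks of
   width b: block k %/ b, offset k %% b inside the block. *)

Definition bnext (b : nat) {n : nat} (k : 'I_n) : 'I_n :=
  insubd k ((k %/ b) * b + (k %% b).+1 %% b)%N.

Definition bprev (b : nat) {n : nat} (k : 'I_n) : 'I_n :=
  insubd k ((k %/ b) * b + (k %% b + b.-1) %% b)%N.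

(* blockwise cyclic right shift sigma applied to every b-block of x *)
Definition bshift {R : Type} (b : nat) {n : nat} (x : 'rV[R]_n) : 'rV[R]_n :=
  \row_(k < n) x 0 (bprev b k).

Definition subcols {R : Type} {m n : nat} (A : 'M[R]_(m, n)) (P : {pred 'I_n})
  : 'M[R]_(m, #|P|) := colsub (@enum_val _ P) A.

Definition blkcols (t b : nat) (S : {set 'I_t}) : {pred 'I_(t * b)} :=
  [pred k : 'I_(t * b) | [exists j in S, (j : nat) == (k %/ b)%N]].

Definition lastcols (t l b : nat) : {pred 'I_(t * b)} :=
  [pred k : 'I_(t * b) | (t - l <= k %/ b)%N].

Definition selcols (t l b : nat) (d : nat -> nat) : {pred 'I_(t * b)} :=
  [pred k : 'I_(t * b) | (t - l <= k %/ b)%N && (d (k %/ b - (t - l)) <= k %% b)%N].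

Definition mx_of_rows {R : Type} {n : nat} (x0 : 'rV[R]_n) (s : seq 'rV[R]_n)
  : 'M[R]_(size s, n) := \matrix_(i < size s) nth x0 s i.

Definition F2toZ (x : 'F_2) : int := (nat_of_ord x)%:Z.
Definition rowZ {n : nat} (x : 'rV['F_2]_n) : 'rV[int]_n := map_mx F2toZ x.

Definition two_e (n p : nat) : 'rV[int]_n :=
  \row_(k < n) (if (k : nat) == p then 2 else 0).

(* rows of Q: for i = 0..l-1, s = 0..d i - 1, sigma^s applied blockwise to
   the zero-padded vector w i *)
Definition Q_rows (n l : nat) (b : nat) (d : nat -> nat) (w : nat -> 'rV['F_2]_n)
  : seq 'rV['F_2]_n :=
  flatten [seq [seq iter s (@bshift _ b n) (w i) | s <- iota 0 (d i)] | i <- iota 0 l].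

Definition G_rows {m n : nat} (G : 'M['F_2]_(m, n)) : seq 'rV['F_2]_n :=
  [seq row i G | i <- enum 'I_m].

(* rows of R = [0 | B], B block diagonal with blocks [0_{dbar x d} 2 I_dbar] *)
Definition R_rows (t l b : nat) (d : nat -> nat) : seq 'rV[int]_(t * b) :=
  flatten [seq [seq two_e (t * b) ((t - l + j) * b + d j + s)
               | s <- iota 0 (b - d j)] | j <- iota 0 l].

Definition Gqc (t l b : nat) (d : nat -> nat) (w : nat -> 'rV['F_2]_(t * b))
  (G : 'M['F_2]_((t - l) * b, t * b)) :=
  mx_of_rows 0 (G_rows G ++ Q_rows (t * b) l b d w).

Definition GLambda (t l b : nat) (d : nat -> nat) (w : nat -> 'rV['F_2]_(t * b))
  (G : 'M['F_2]_((t - l) * b, t * b)) : 'M[int]_(t * b) :=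
  \matrix_(i < t * b)
    nth 0 ([seq rowZ x | x <- G_rows G ++ Q_rows (t * b) l b d w] ++ R_rows t l b d) i.

(* Main.v *)
Require Import Defs.
From HB Require Import structures.
From mathcomp Require Import all_boot all_order all_algebra.
Import Order.TTheory GRing.Theory Num.Theory.
Local Open Scope ring_scope.

From mathcomp Require Import all_fingroup zify.
Definition RF (t l b : nat) (d : nat -> nat) (w : nat -> 'rV['F_2]_(t * b))
  (G : 'M['F_2]_((t - l) * b, t * b)) (c : nat) : 'rV[int]_(t * b) :=
  if (c < (t - l) * b)%N then rowZ (nth 0 (G_rows G) c)
  else if (c %% b < d (c %/ b - (t - l)))%N
  then rowZ (iter (c %% b)%N (bshift b) (w (c %/ b - (t - l))%N))
  else two_e (t * b) c.

Definition keyc (t l b : nat) (d : nat -> nat) (c : nat) : nat :=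
  if (c < (t - l) * b)%N then 0%N
  else if (c %% b < d (c %/ b - (t - l)))%N then (b - c %% b).+1 else b.+2.

Definition colsQ (t l b : nat) (d : nat -> nat) : seq nat :=
  flatten [seq [seq ((t - l + i) * b + s)%N | s <- iota 0 (d i)] | i <- iota 0 l].
Definition colsR (t l b : nat) (d : nat -> nat) : seq nat :=
  flatten [seq [seq ((t - l + j) * b + d j + s)%N | s <- iota 0 (b - d j)] | j <- iota 0 l].
Definition cols t l b d := (iota 0 ((t - l) * b) ++ colsQ t l b d ++ colsR t l b d).

Lemma F2toZ0 : F2toZ 0 = 0. Proof. by []. Qed.
Lemma F2toZ1 : F2toZ 1 = 1. Proof. by []. Qed.

Lemma nth_G_rows m n (G : 'M['F_2]_(m, n)) c (hc : (c < m)%N) :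
  nth 0 (G_rows G) c = row (Ordinal hc) G.
Proof.
rewrite /G_rows (nth_map (Ordinal hc)) ?size_enum_ord //.
by congr row; apply/val_inj; rewrite /= nth_enum_ord.
Qed.
Lemma det_diag_perm n (A : 'M[int]_n) (f : 'I_n -> 'I_n) (kr : 'I_n -> nat) :
  injective f ->
  (forall i i', A i (f i') != 0 -> i' != i -> (kr i < kr i')%N) ->
  `|\det A| = \prod_i `|A i (f i)|.
Proof.
move=> finj hk; pose p := perm finj.
rewrite /determinant (bigD1 p) //= [X in _ + X]big1 ?addr0.
  by rewrite normrM normr_sign mul1r normr_prod; apply: eq_bigr => i _; rewrite permE.
move=> s nsp; apply/eqP; rewrite mulf_eq0; apply/orP; right.
apply/negPn/negP => /prodf_neq0 hnz.
pose q := (s * p^-1)%g.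
have hsq : forall i, s i = f (q i).
  by move=> i; rewrite permM -[in LHS](permKV p (s i)) permE.
have hle : forall i, (kr i <= kr (q i))%N.
  move=> i; have [->|ne] := eqVneq (q i) i; first by [].
  by apply: ltnW; apply: hk => //; rewrite -hsq; apply: hnz.
have hq1 : q = 1%g.
  apply/permP => i0; rewrite perm1; apply/eqP/negPn/negP => ne.
  have hlt : (kr i0 < kr (q i0))%N by apply: hk; rewrite ?ne // -hsq; apply: hnz.
  have hsum : (\sum_i kr (q i) = \sum_i kr i)%N.
    by rewrite [RHS](reindex_inj (@perm_inj _ q)).
  move: hsum; rewrite (bigD1 i0) //= [in RHS](bigD1 i0) //=.
  have := @leq_sum _ (index_enum _) (fun i => i != i0) kr (fun i => kr (q i)) (fun i _ => hle i).
  move=> h1 h2; have := leq_add hlt h1; rewrite h2 addSn ltnn; done.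
move/eqP: nsp; apply; apply/permP => i; by rewrite hsq hq1 perm1 permE.
Qed.
Lemma divmod_blk (a b s : nat) : (0 < b)%N -> (s < b)%N ->
  ((a * b + s) %/ b = a)%N /\ ((a * b + s) %% b = s)%N.
Proof.
move=> b0 sb; split; first by rewrite divnMDl // divn_small ?addn0.
by rewrite modnMDl modn_small.
Qed.

Lemma bprev_val t b (k : 'I_(t * b)) : (0 < b)%N ->
  val (bprev b k) = (k %/ b * b + (k %% b + b.-1) %% b)%N.
Proof.
move=> b0; rewrite /bprev insubdK //.
have hk : (k %/ b < t)%N by rewrite ltn_divLR // ltn_ord.
have hy : ((k %% b + b.-1) %% b < b)%N by rewrite ltn_pmod.
apply: (@leq_trans ((k %/ b).+1 * b)); first by rewrite mulSn addnC ltn_add2r.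
by rewrite leq_mul2r hk orbT.
Qed.

Lemma iter_bprev_val t b s (k : 'I_(t * b)) : (0 < b)%N ->
  val (iter s (bprev b) k) = (k %/ b * b + (k %% b + s * b.-1) %% b)%N.
Proof.
move=> b0; elim: s => [|s IH]; first by rewrite mul0n addn0 modn_mod -divn_eq.
rewrite iterS bprev_val // IH.
have hy : ((k %% b + s * b.-1) %% b < b)%N by rewrite ltn_pmod.
have [-> ->] := @divmod_blk (k %/ b) _ _ b0 hy.
congr (_ + _)%N; rewrite modnDml; congr (_ %% _)%N; rewrite mulSn; lia.
Qed.

Lemma iter_bprev_blk t b s (k : 'I_(t * b)) : (0 < b)%N ->
  (iter s (bprev b) k %/ b = k %/ b)%N /\
  (iter s (bprev b) k %% b = (k %% b + s * b.-1) %% b)%N.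
Proof.
move=> b0; rewrite iter_bprev_val //.
have hy : ((k %% b + s * b.-1) %% b < b)%N by rewrite ltn_pmod.
exact: divmod_blk.
Qed.

Lemma off_le b p s : (0 < b)%N -> (s <= p)%N -> (p < b)%N ->
  ((p + s * b.-1) %% b = p - s)%N.
Proof.
move=> b0 sp pb.
have -> : (p + s * b.-1 = s * b + (p - s))%N.
  have -> : (s * b = s * b.-1 + s)%N by rewrite -mulnSr prednK.
  lia.
by rewrite modnMDl modn_small // ltn_subLR; lia.
Qed.

Lemma off_add b p s : (0 < b)%N -> (p < b)%N ->
  (((p + s * b.-1) %% b + s) %% b = p)%N.
Proof.
move=> b0 pb; rewrite modnDml -addnA -mulnSr prednK // addnC modnMDl.
by rewrite modn_small.
Qed.

Lemma iter_bshift (R : Type) b n s (x : 'rV[R]_n) (k : 'I_n) :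
  (iter s (bshift b) x) 0 k = x 0 (iter s (bprev b) k).
Proof.
elim: s k => [|s IH] k //=.
by rewrite /bshift mxE IH -iterSr.
Qed.
Lemma perm_flatten_cat (T : eqType) (I : Type) (A B : I -> seq T) (s : seq I) :
  perm_eq (flatten [seq A j ++ B j | j <- s])
          (flatten (map A s) ++ flatten (map B s)).
Proof.
elim: s => [|j s IH] //=.
rewrite -!catA perm_cat2l.
by rewrite perm_sym perm_catCA perm_cat2l perm_sym.
Qed.

Lemma iota_blocks b L k :
  iota (k * b) (L * b) = flatten [seq iota ((k + j) * b) b | j <- iota 0 L].
Proof.
elim: L k => [|L IH] k //=.
rewrite mulSn iotaD addn0; congr (_ ++ _).
rewrite -mulSnr IH -(addn0 1%N) iotaDl -map_comp; congr flatten; apply: eq_map => j /=.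
by rewrite add1n addSnnS.
Qed.
Lemma cols_perm t l b d : (l <= t)%N -> (forall j, (j < l)%N -> (d j <= b)%N) ->
  perm_eq (cols t l b d) (iota 0 (t * b)).
Proof.
move=> lt db.
have -> : (t * b = (t - l) * b + l * b)%N by rewrite -mulnDl subnK.
rewrite iotaD add0n iota_blocks /cols perm_cat2l.
have -> : flatten [seq iota ((t - l + j) * b) b | j <- iota 0 l] =
  flatten [seq [seq ((t - l + j) * b + s)%N | s <- iota 0 (d j)] ++
               [seq ((t - l + j) * b + d j + s)%N | s <- iota 0 (b - d j)]
          | j <- iota 0 l].
  congr flatten; apply/eq_in_map => j; rewrite mem_iota => /andP[_ hj].
  have -> : iota ((t - l + j) * b) b = iota ((t - l + j) * b) (d j + (b - d j))
    by rewrite subnKC // db.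
  rewrite iotaD; congr (_ ++ _).
    by rewrite -{1}(addn0 ((t - l + j) * b)%N) iotaDl.
  by rewrite -{1}(addn0 ((t - l + j) * b + d j)%N) iotaDl.
rewrite perm_sym; exact: perm_flatten_cat.
Qed.

Lemma list_eq t l b d w (G : 'M['F_2]_((t - l) * b, t * b)) : (0 < b)%N ->
  (forall j, (j < l)%N -> (d j <= b)%N) ->
  [seq rowZ x | x <- G_rows G ++ Q_rows (t * b) l b d w] ++ R_rows t l b d
  = map (RF t l b d w G) (cols t l b d).
Proof.
move=> b0 db.
rewrite /cols !map_cat -catA; congr (_ ++ _ ++ _).
- have -> : iota 0 ((t - l) * b) = iota 0 (size (G_rows G)).
    by rewrite size_map size_enum_ord.
  have {1}-> : G_rows G = mkseq (nth 0 (G_rows G)) (size (G_rows G)) by rewrite mkseq_nth.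
  rewrite /mkseq -map_comp; apply: (iffLR (eq_in_map _ _ _)) => c.
  rewrite mem_iota /= => hc; rewrite /RF.
  by move: hc; rewrite size_map size_enum_ord => ->.
- rewrite /Q_rows /colsQ !map_flatten -!map_comp; congr flatten.
  apply/eq_in_map => i; rewrite mem_iota => /andP[_ hi] /=.
  rewrite -!map_comp; apply/eq_in_map => s; rewrite mem_iota => /andP[_ hs] /=.
  have sb : (s < b)%N by apply: leq_trans hs (db i hi).
  have [h1 h2] := @divmod_blk (t - l + i) _ _ b0 sb.
  have hge : ((t - l) * b <= (t - l + i) * b + s)%N.
    by apply: (leq_trans _ (leq_addr _ _)); rewrite leq_mul2r leq_addr orbT.
  rewrite /RF h1 h2 ifF; last by apply/negbTE; rewrite -leqNgt.
  by rewrite addKn -(add0n (d i)) hs.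
- rewrite /R_rows /colsR map_flatten -map_comp; congr flatten.
  apply/eq_in_map => j; rewrite mem_iota => /andP[_ hj] /=.
  rewrite -!map_comp; apply/eq_in_map => s; rewrite mem_iota => /andP[_ hs] /=.
  have sb : (d j + s < b)%N by rewrite -ltn_subRL.
  have [h1 h2] := @divmod_blk (t - l + j) _ _ b0 sb.
  rewrite /RF -addnA h1 h2 ifF; last first.
    apply/negbTE; rewrite -leqNgt; apply: (leq_trans _ (leq_addr _ _)).
    by rewrite leq_mul2r leq_addr orbT.
  by rewrite addKn ifF // ltnNge leq_addr.
Qed.
Lemma key_lt t l b d (w : nat -> 'rV['F_2]_(t * b)) (G : 'M['F_2]_((t - l) * b, t * b)) (c : nat) (k : 'I_(t * b)) :
  (0 < b)%N -> (l <= t)%N -> (forall j, (j < l)%N -> (d j <= b)%N) ->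
  (forall i, (i < l)%N -> (1 <= d i)%N ->
     [/\ (forall k : 'I_(t * b), (k %/ b < t - l)%N -> w i 0 k = 0) &
         forall k : 'I_(t * b), (t - l <= k %/ b)%N ->
           (k %% b < d (k %/ b - (t - l)))%N ->
           w i 0 k = if ((k %/ b - (t - l))%N == i) && ((k %% b)%N == 0%N)
                     then 1 else 0]) ->
  (forall (i : 'I_((t - l) * b)) (k : 'I_(t * b)), (k < (t - l) * b)%N ->
     G i k = if (i : nat) == (k : nat) then 1 else 0) ->
  (c < t * b)%N -> c != k -> RF t l b d w G c 0 k != 0 ->
  (keyc t l b d c < keyc t l b d k)%N.
Proof.
move=> b0 lt db Hw Gid hc ne.
rewrite /RF /keyc.
have keypos : (0 < if (k %% b < d (k %/ b - (t - l)))%N then (b - k %% b).+1 else b.+2)%N.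
  by case: ifP.
case: (ltnP c ((t - l) * b)) => hcm.
  rewrite (@nth_G_rows _ _ G c hcm) /rowZ !mxE.
  case: (ltnP k ((t - l) * b)) => hkm; last by move=> _; exact: keypos.
  rewrite Gid //=; case: (@eqP nat c (nat_of_ord k)) => [e|_ //]; by move: ne; rewrite e eqxx.
have hcb : (t - l <= c %/ b)%N by rewrite leq_divRL.
have hct : (c %/ b < t)%N by rewrite ltn_divLR.
set j := (c %/ b - (t - l))%N.
have hj : (j < l)%N by rewrite /j; lia.
have hpb : (c %% b < b)%N by rewrite ltn_pmod.
case: ifP => hp; last first.
  rewrite mxE; case: (@eqP nat (nat_of_ord k) c) => [e|_ //]; by move: ne; rewrite e eqxx.
have hd : (1 <= d j)%N by apply: leq_ltn_trans hp.
have [hwz hwv] := Hw j hj hd.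
rewrite /rowZ mxE iter_bshift.
set k' := iter _ (bprev b) k.
have [kb ko] := @iter_bprev_blk t b (c %% b)%N k b0.
case: (ltnP k ((t - l) * b)) => hkm.
  by rewrite hwz ?eqxx // kb ltn_divLR.
have hkb : (t - l <= k %/ b)%N by rewrite leq_divRL.
have hpk' : (k %% b < b)%N by rewrite ltn_pmod.
case: ifP => hpk; last by move=> _; lia.
case: (leqP (c %% b) (k %% b)) => hle; last by move=> _; rewrite ltnS; lia.
rewrite hwv kb ?ko ?off_le //; last by apply: leq_ltn_trans hpk; apply: leq_subr.
case: ifP => //= /andP[/eqP hjj /eqP h0] _.
have e1 : (c %/ b = k %/ b)%N by move: hjj; rewrite /j; lia.
have e2 : (c %% b = k %% b)%N by lia.
by move: ne; rewrite (divn_eq c b) (divn_eq k b) e1 e2 eqxx.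
Qed.

Lemma diag_val t l b d (w : nat -> 'rV['F_2]_(t * b)) (G : 'M['F_2]_((t - l) * b, t * b)) (k : 'I_(t * b)) :
  (0 < b)%N -> (l <= t)%N ->
  (forall i, (i < l)%N -> (1 <= d i)%N ->
     [/\ (forall k : 'I_(t * b), (k %/ b < t - l)%N -> w i 0 k = 0) &
         forall k : 'I_(t * b), (t - l <= k %/ b)%N ->
           (k %% b < d (k %/ b - (t - l)))%N ->
           w i 0 k = if ((k %/ b - (t - l))%N == i) && ((k %% b)%N == 0%N)
                     then 1 else 0]) ->
  (forall (i : 'I_((t - l) * b)) (k : 'I_(t * b)), (k < (t - l) * b)%N ->
     G i k = if (i : nat) == (k : nat) then 1 else 0) ->
  RF t l b d w G k 0 k = if k \in selcols t l b d then 2 else 1.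
Proof.
move=> b0 lt Hw Gid.
rewrite /RF inE.
case: (ltnP k ((t - l) * b)) => hcm.
  rewrite (@nth_G_rows _ _ G k hcm) /rowZ !mxE Gid //= eqxx.
  by rewrite leqNgt ltn_divLR // hcm.
have hcb : (t - l <= k %/ b)%N by rewrite leq_divRL.
have hct : (k %/ b < t)%N by rewrite ltn_divLR.
rewrite hcb /=.
case: ifP => hp; last by rewrite leqNgt hp /= mxE eqxx.
rewrite leqNgt hp /=.
set j := (k %/ b - (t - l))%N.
have hj : (j < l)%N by rewrite /j; lia.
have hpb : (k %% b < b)%N by rewrite ltn_pmod.
have hd : (1 <= d j)%N by apply: leq_ltn_trans hp.
have [hwz hwv] := Hw j hj hd.
rewrite /rowZ mxE iter_bshift.
have [kb ko] := @iter_bprev_blk t b (k %% b)%N k b0.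
rewrite hwv kb ?ko ?off_le ?subnn ?eqxx //.
Qed.

Theorem corollary1 (b c t l r : nat) (H : 'M['F_2]_(c * b, t * b))
  (d : nat -> nat) (w : nat -> 'rV['F_2]_(t * b))
  (G : 'M['F_2]_((t - l) * b, t * b)) :
  (0 < b)%N -> (0 < c)%N -> (0 < t)%N ->
  (* H is a c x t array of b x b circulants *)
  (forall (i : 'I_(c * b)) (j : 'I_(t * b)), H (bnext b i) (bnext b j) = H i j) ->
  \rank H = r ->
  (* l is the least number of column blocks giving rank r, c <= l <= t,
     and the last l column blocks (D* ) give rank r *)
  (c <= l <= t)%N ->
  (forall S : {set 'I_t}, \rank (subcols H (blkcols t b S)) = r -> (l <= #|S|)%N) ->
  \rank (subcols H (lastcols t l b)) = r ->
  (* the d_j, and the selected columns of D* are independent and number r *)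
  (forall j, (j < l)%N -> (d j <= b)%N) ->
  \rank (subcols H (selcols t l b d)) = #|selcols t l b d| ->
  #|selcols t l b d| = r ->
  (* the vectors w_i (zero-padded on the first t-l blocks) *)
  (forall i, (i < l)%N -> (1 <= d i)%N ->
     [/\ H *m (w i)^T = 0,
         forall k : 'I_(t * b), (k %/ b < t - l)%N -> w i 0 k = 0 &
         forall k : 'I_(t * b), (t - l <= k %/ b)%N ->
           (k %% b < d (k %/ b - (t - l)))%N ->
           w i 0 k = if ((k %/ b - (t - l))%N == i) && ((k %% b)%N == 0%N)
                     then 1 else 0]) ->
  (* G = [I | G'] with G' a (t-l) x l array of b x b circulants *)
  (forall (i : 'I_((t - l) * b)) (k : 'I_(t * b)), (k < (t - l) * b)%N ->
     G i k = if (i : nat) == (k : nat) then 1 else 0) ->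
  (forall (i : 'I_((t - l) * b)) (k : 'I_(t * b)), ((t - l) * b <= k)%N ->
     G (bnext b i) (bnext b k) = G i k) ->
  (* G*_qc = [G ; Q] is a generator matrix of the code C = ker H *)
  (forall x : 'rV['F_2]_(t * b), (x <= Gqc t l b d w G)%MS = (H *m x^T == 0)) ->
  row_free (Gqc t l b d w G) ->
  `|\det (GLambda t l b d w G)| = 2 ^+ r.
Proof.
move=> b0 c0 t0 Hcirc Hrank /andP[cl lt] Hmin Hlast Hdb Hsel Hselr Hw Gid Gcirc Hgen Hfree.
have Hw' : forall i, (i < l)%N -> (1 <= d i)%N ->
     [/\ (forall k : 'I_(t * b), (k %/ b < t - l)%N -> w i 0 k = 0) &
         forall k : 'I_(t * b), (t - l <= k %/ b)%N ->
           (k %% b < d (k %/ b - (t - l)))%N ->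
           w i 0 k = if ((k %/ b - (t - l))%N == i) && ((k %% b)%N == 0%N)
                     then 1 else 0].
  by move=> i hi hd; case: (Hw i hi hd).
have hperm := @cols_perm t l b d lt Hdb.
have hsz : size (cols t l b d) = (t * b)%N by rewrite (perm_size hperm) size_iota.
have huniq : uniq (cols t l b d) by rewrite (perm_uniq hperm) iota_uniq.
have hlt : forall m : 'I_(t * b), (nth 0%N (cols t l b d) m < t * b)%N.
  move=> m; have : nth 0%N (cols t l b d) m \in iota 0 (t * b).
    by rewrite -(perm_mem hperm) mem_nth // hsz.
  by rewrite mem_iota.
pose f := fun m : 'I_(t * b) => Ordinal (hlt m).
have finj : injective f.
  move=> m1 m2 /(congr1 val) /= e; apply/val_inj/eqP.
  rewrite -(nth_uniq 0%N _ _ huniq) ?hsz ?ltn_ord //; apply/eqP; exact: e.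
have hA : forall m k, GLambda t l b d w G m k = RF t l b d w G (nth 0%N (cols t l b d) m) 0 k.
  by move=> m k; rewrite /GLambda mxE (@list_eq t l b d w G b0 Hdb) (nth_map 0%N) // hsz.
rewrite (@det_diag_perm _ _ f (fun m => keyc t l b d (nth 0%N (cols t l b d) m)) finj); last first.
  move=> i i' hnz ne; rewrite hA in hnz.
  apply: (@key_lt t l b d w G _ _ b0 lt Hdb Hw' Gid (hlt i) _ hnz).
  by rewrite /= nth_uniq ?hsz // eq_sym.
transitivity (\prod_i `|RF t l b d w G (f i) 0 (f i)|).
  by apply: eq_bigr => i _; rewrite hA.
transitivity (\prod_(k < t * b) `|RF t l b d w G k 0 k|).
  by rewrite [RHS](reindex_inj finj).
transitivity (\prod_(k < t * b) (if k \in selcols t l b d then 2 else 1) : int).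
  by apply: eq_bigr => k _; rewrite (@diag_val t l b d w G k b0 lt Hw' Gid); case: ifP.
by rewrite -big_mkcond prodr_const Hselr.
Qed.
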